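(* Let $L$ be the lattice of IHS manifolds of a given deformation type, $M$ a lattice of signature $(1,t)$ with a primitive embedding $j\colon M\hookrightarrow L$, and $N=j(M)^\perp$. If $\mathrm{Mo}^2(L)\supset\tilde{SO}^+(L)$, then $\Gamma_{M,j}$ is an arithmetic subgroup of $O(N)$.
   Context: $\mathrm{Mo}^2(L)=\phi\,\mathrm{Mo}^2(X)\,\phi^{-1}\subset O(L)$ is the monodromy group of the IHS manifolds transported to $L$ by a marking $\phi$. $\mathrm{Mo}^2(M,j)=\{g\in\mathrm{Mo}^2(L):g|_{j(M)}=\mathrm{id}\}$ and $\Gamma_{M,j}\subset O(N)$ is its image under restriction to $N$. For a lattice $\Lambda$ with discriminant group $A_\Lambda=\Lambda^*/\Lambda$: $\tilde O^+(\Lambda)=\{g\in O(\Lambda): g|_{A_\Lambda}=\mathrm{id}$, real spinor norm of $g$ equal to $1\}$, where the real spinor norm of $g=\rho_{v_1}\cdots\rho_{v_m}$ (reflections, $v_i\in\Lambda_{\mathbb R}$) is $\prod(-v_i^2/2)$ modulo squares; $\tilde{SO}^+(\Lambda)=\{g\in\tilde O^+(\Lambda):\det g=1\}$. *)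

(* Defs.v *)
From HB Require Import structures.
From mathcomp Require Import all_boot all_order all_algebra.
From mathcomp Require Import Rstruct.
From Stdlib Require Rdefinitions.
Notation R := Rdefinitions.R.
Set Implicit Arguments. Unset Strict Implicit. Unset Printing Implicit Defensive.
Import Order.TTheory GRing.Theory Num.Theory.
Local Open Scope ring_scope.

(* A lattice of rank n is Z^n (row vectors) with integral symmetric Gram
   matrix B; b(x,y) = x *m B *m y^T.  Elements of O(L) are integer matrices
   acting on the right on row vectors: x |-> x *m g. *)

Definition mxR {m n} (A : 'M[int]_(m, n)) : 'M[R]_(m, n) := map_mx (fun z : int => z%:~R) A.
Definition mxQ {m n} (A : 'M[int]_(m, n)) : 'M[rat]_(m, n) := map_mx (fun z : int => z%:~R) A.

Definition has_signature {m} (C : 'M[R]_m) (p q : nat) : Prop :=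
  (p + q = m)%N /\
  exists P : 'M[R]_m, P \in unitmx /\
    P *m C *m P^T = diag_mx (\row_(i < m) (if (val i < p)%N then 1 else -1)).

Definition is_lattice_gram {m} (C : 'M[int]_m) : Prop := C^T = C.

Definition even_gram {m} (C : 'M[int]_m) : Prop := forall i, ~~ odd `|C i i|%N.

Definition isom_L {n} (B : 'M[int]_n) (g : 'M[int]_n) : Prop :=
  g \in unitmx /\ g *m B *m g^T = B.

Definition is_integral {n} (x : 'rV[rat]_n) : Prop :=
  forall i, x 0 i \is a Num.int.

(* g acts trivially on A_L = L^* / L, where L^* = {x in L_Q | x B in Z^n} *)
Definition acts_trivially_on_disc {n} (B : 'M[int]_n) (g : 'M[int]_n) : Prop :=
  forall x : 'rV[rat]_n, is_integral (x *m mxQ B) -> is_integral (x *m mxQ g - x).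

(* reflection rho_v(x) = x - 2 b(x,v)/b(v,v) v, as a matrix on row vectors of L_R *)
Definition qR {n} (B : 'M[int]_n) (v : 'rV[R]_n) : R := (v *m mxR B *m v^T) 0 0.
Definition reflmx {n} (B : 'M[int]_n) (v : 'rV[R]_n) : 'M[R]_n :=
  1%:M - (2 / qR B v) *: (mxR B *m v^T *m v).

(* matrix of rho_{v1} o ... o rho_{vm} (right action: composition reverses) *)
Fixpoint refl_comp {n} (B : 'M[int]_n) (vs : seq 'rV[R]_n) : 'M[R]_n :=
  match vs with
  | [::] => 1%:M
  | v :: vs' => refl_comp B vs' *m reflmx B v
  end.

(* real spinor norm of g equal to 1 (mod squares: the product is > 0) *)
Definition real_spinor_norm_one {n} (B : 'M[int]_n) (g : 'M[int]_n) : Prop :=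
  exists vs : seq 'rV[R]_n,
    all (fun v => qR B v != 0) vs /\ refl_comp B vs = mxR g /\
    0 < \prod_(v <- vs) (- qR B v / 2).

Definition tildeOplus {n} (B : 'M[int]_n) (g : 'M[int]_n) : Prop :=
  isom_L B g /\ acts_trivially_on_disc B g /\ real_spinor_norm_one B g.

Definition tildeSOplus {n} (B : 'M[int]_n) (g : 'M[int]_n) : Prop :=
  tildeOplus B g /\ \det g = 1.

Definition subgroup_OL {n} (B : 'M[int]_n) (G : 'M[int]_n -> Prop) : Prop :=
  (forall g, G g -> isom_L B g) /\ G 1%:M /\
  (forall g h, G g -> G h -> G (g *m h)) /\
  (forall g, G g -> G (invmx g)).

(* primitive embedding j : M -> L given by the matrix J (rows = images of a basis of M) *)
Definition primitive_embedding {m n} (C : 'M[int]_m) (B : 'M[int]_n) (J : 'M[int]_(m, n)) : Prop :=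
  J *m B *m J^T = C /\
  (forall (x : 'rV[int]_n) (k : int), k != 0 ->
     (exists y : 'rV[int]_m, k *: x = y *m J) -> exists y : 'rV[int]_m, x = y *m J).

Definition inN {m n} (B : 'M[int]_n) (J : 'M[int]_(m, n)) (x : 'rV[int]_n) : Prop :=
  x *m B *m J^T = 0.

(* O(N): form-preserving Z-linear bijections of N (maps L -> L considered on N) *)
Definition isom_N {m n} (B : 'M[int]_n) (J : 'M[int]_(m, n)) (f : 'rV[int]_n -> 'rV[int]_n) : Prop :=
  (forall x, inN B J x -> inN B J (f x)) /\
  (forall x y, inN B J x -> inN B J y -> f (x + y) = f x + f y) /\
  (forall x y, inN B J x -> inN B J y -> f x *m B *m (f y)^T = x *m B *m y^T) /\
  (forall y, inN B J y -> exists2 x, inN B J x & f x = y).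

Definition Gamma {m n} (B : 'M[int]_n) (J : 'M[int]_(m, n)) (G : 'M[int]_n -> Prop)
  (f : 'rV[int]_n -> 'rV[int]_n) : Prop :=
  exists g, G g /\ J *m g = J /\ forall x, inN B J x -> f x = x *m g.

(* arithmetic subgroup of O(N): a subgroup of O(N) of finite index
   (for subgroups of O(N), commensurability with O(N) = finite index) *)
Definition arithmetic_subgroup_ON {m n} (B : 'M[int]_n) (J : 'M[int]_(m, n))
  (Gam : ('rV[int]_n -> 'rV[int]_n) -> Prop) : Prop :=
  (forall f, Gam f -> isom_N B J f) /\
  exists reps : seq ('rV[int]_n -> 'rV[int]_n),
    (forall r, List.In r reps -> isom_N B J r) /\
    forall h, isom_N B J h ->
      exists r, List.In r reps /\ exists2 f, Gam f &
        forall x, inN B J x -> h x = r (f x).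

(* Main.v *)
Require Import Defs.
From HB Require Import structures.
From mathcomp Require Import all_boot all_order all_algebra.
From mathcomp Require Import Rstruct.
From Stdlib Require Import Classical ClassicalEpsilon.
From mathcomp Require Import ring lra.
Import Order.TTheory GRing.Theory Num.Theory.
Local Open Scope ring_scope.


Lemma mx_eq_rows (T : pzSemiRingType) m n (M N : 'M[T]_(m,n)) :
  (forall x : 'rV_m, x *m M = x *m N) -> M = N.
Proof. by move=> H; apply/row_matrixP => i; rewrite !rowE H. Qed.

Lemma rv_eq_tr (T : comPzRingType) n (u v : 'rV[T]_n) :
  (forall y : 'rV_n, u *m y^T = v *m y^T) -> u = v.
Proof.
move=> H; apply/rowP => j; have := H (delta_mx 0 j).
by rewrite trmx_delta -!colE => /matrixP /(_ 0 0); rewrite !mxE.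
Qed.

Lemma mx_eq_bilin (T : comPzRingType) m n (M N : 'M[T]_(m,n)) :
  (forall (x : 'rV_m) (y : 'rV_n), x *m M *m y^T = x *m N *m y^T) -> M = N.
Proof. by move=> H; apply: mx_eq_rows => x; apply: rv_eq_tr => y; exact: H. Qed.

Section Ext.
Variables (b t : nat) (B : 'M[int]_b) (C : 'M[int]_(1 + t)) (J : 'M[int]_(1 + t, b)).
Hypothesis Bsym : B^T = B.
Hypothesis JBJ : J *m B *m J^T = C.

Definition P0 := B *m J^T *m \adj C.
Definition Q0 := (\det C)%:M - P0 *m J.

Lemma JP0 : J *m P0 = (\det C)%:M.
Proof. by rewrite /P0 !mulmxA JBJ mul_mx_adj. Qed.

Lemma Q0BJ : Q0 *m B *m J^T = 0.
Proof.
rewrite /Q0 /P0 !mulmxBl mul_scalar_mx.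
have -> : B *m J^T *m \adj C *m J *m B *m J^T = B *m J^T *m (\adj C *m (J *m B *m J^T)).
  by rewrite !mulmxA.
by rewrite JBJ mul_adj_mx mul_mx_scalar -scalemxAl subrr.
Qed.

Lemma Q0P0J : Q0 + P0 *m J = (\det C)%:M.
Proof. by rewrite /Q0 subrK. Qed.

Lemma inN_Q0 x : inN B J (x *m Q0).
Proof. by rewrite /inN -!mulmxA (mulmxA Q0) Q0BJ mulmx0. Qed.

Lemma inN0 : inN B J 0. Proof. by rewrite /inN !mul0mx. Qed.
Lemma inND x y : inN B J x -> inN B J y -> inN B J (x + y).
Proof. by rewrite /inN !mulmxDl => -> ->; rewrite addr0. Qed.
Lemma inNZ (k : int) x : inN B J x -> inN B J (k *: x).
Proof. by rewrite /inN -!scalemxAl => ->; rewrite scaler0. Qed.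
Lemma inN_sum I (r : seq I) (F : I -> 'rV_b) :
  (forall i, inN B J (F i)) -> inN B J (\sum_(i <- r) F i).
Proof.
move=> H; elim: r => [|i r IH]; first by rewrite big_nil; exact: inN0.
by rewrite big_cons; apply: inND.
Qed.

Section H.
Variable h : 'rV[int]_b -> 'rV[int]_b.
Hypothesis hiso : isom_N B J h.

Lemma h0 : h 0 = 0.
Proof.
case: hiso => _ [hadd _].
have := hadd 0 0 inN0 inN0; rewrite addr0 => /(congr1 (fun v => v - h 0)).
by rewrite subrr addrK => /esym.
Qed.

Lemma hN x : inN B J x -> h (- x) = - h x.
Proof.
case: hiso => hN [hadd _] hx.
have hx' : inN B J (- x) by rewrite -scaleN1r; apply: inNZ.
have := hadd _ _ hx hx'; rewrite subrr h0 => /eqP; rewrite eq_sym addr_eq0 => /eqP.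
by move=> ->; rewrite opprK.
Qed.

Lemma hZn (k : nat) x : inN B J x -> h (k%:Z *: x) = k%:Z *: h x.
Proof.
case: hiso => _ [hadd _] hx.
elim: k => [|k IH]; first by rewrite !scale0r h0.
have -> : (k.+1)%:Z = k%:Z + 1 by rewrite -addn1 PoszD.
rewrite !scalerDl !scale1r hadd ?IH //.
exact: inNZ.
Qed.

Lemma hZ (k : int) x : inN B J x -> h (k *: x) = k *: h x.
Proof.
move=> hx; case: k => k; first exact: hZn.
rewrite NegzE !scaleNr hN ?hZn //; exact: inNZ.
Qed.

Lemma h_sum I (r : seq I) (F : I -> 'rV_b) :
  (forall i, inN B J (F i)) -> h (\sum_(i <- r) F i) = \sum_(i <- r) h (F i).
Proof.
case: hiso => _ [hadd _] H; elim: r => [|i r IH]; first by rewrite !big_nil h0.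
by rewrite !big_cons hadd ?IH //; exact: inN_sum.
Qed.

Definition Hm := \matrix_(i < b) h (row i Q0).
Definition Gh := P0 *m J + Hm.

Lemma hQ x : h (x *m Q0) = x *m Hm.
Proof.
rewrite mulmx_sum_row h_sum; last by move=> i; apply: inNZ; rewrite rowE; apply: inN_Q0.
rewrite [RHS]mulmx_sum_row; apply: eq_bigr => i _; rewrite hZ ?rowK //.
by rewrite rowE; apply: inN_Q0.
Qed.

Lemma HmN x : inN B J (x *m Hm).
Proof. by rewrite -hQ; case: hiso => hN _; apply: hN; exact: inN_Q0. Qed.

Lemma HmBJ : Hm *m B *m J^T = 0.
Proof.
apply: mx_eq_rows => x; rewrite mulmx0 !mulmxA; exact: HmN.
Qed.

Lemma Gh_J : J *m Gh = \det C *: J.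
Proof.
rewrite /Gh mulmxDr mulmxA JP0 mul_scalar_mx.
suff -> : J *m Hm = 0 by rewrite addr0.
apply/row_matrixP => k; rewrite row_mul row0 -hQ -row_mul /Q0 mulmxBr mulmxA JP0.
by rewrite mul_scalar_mx mul_mx_scalar subrr row0 h0.
Qed.

Lemma Gh_N x : inN B J x -> x *m Gh = \det C *: h x.
Proof.
move=> hx; rewrite /Gh mulmxDr -hQ /Q0 mulmxBr mul_mx_scalar.
have -> : x *m (P0 *m J) = 0.
  by move: hx; rewrite /inN /P0 !mulmxA => ->; rewrite !mul0mx.
by rewrite subr0 add0r hZ.
Qed.

Lemma trmxBJ : (B *m J^T)^T = J *m B.
Proof. by rewrite trmx_mul trmxK Bsym. Qed.

Lemma Gh_iso : Gh *m B *m Gh^T = (\det C ^+ 2) *: B.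
Proof.
have HH : Hm *m B *m Hm^T = Q0 *m B *m Q0^T.
  apply: mx_eq_bilin => x y.
  have E (M : 'M_b) : x *m (M *m B *m M^T) *m y^T = (x *m M) *m B *m (y *m M)^T.
    by rewrite trmx_mul !mulmxA.
  rewrite !E -!hQ.
  case: hiso => _ [_ [hf _]]; rewrite hf //; exact: inN_Q0.
have JBH : J *m B *m Hm^T = 0.
  by rewrite -trmxBJ -trmx_mul mulmxA HmBJ trmx0.
have JBQ : J *m B *m Q0^T = 0.
  by rewrite -trmxBJ -trmx_mul mulmxA Q0BJ trmx0.
have E : (\det C ^+ 2) *: B = (Q0 + P0 *m J) *m B *m (Q0 + P0 *m J)^T.
  by rewrite Q0P0J tr_scalar_mx mul_scalar_mx mul_mx_scalar scalerA expr2.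
have X1 (U V : 'M_b) : (U + V) *m B *m (U + V)^T =
    U *m B *m U^T + U *m B *m V^T + (V *m B *m U^T + V *m B *m V^T).
  by rewrite linearD /= !mulmxDl !mulmxDr addrA.
have Z1 (U : 'M_b) : U *m B *m (P0 *m J)^T = U *m B *m J^T *m P0^T.
  by rewrite trmx_mul !mulmxA.
have Z2 (U : 'M_b) : P0 *m J *m B *m U^T = P0 *m (J *m B *m U^T).
  by rewrite !mulmxA.
rewrite E /Gh addrC (X1 Hm) (X1 Q0) !Z1 HmBJ Q0BJ !Z2 JBH JBQ !mulmx0 !mul0mx.
by rewrite !(addr0, add0r) HH.
Qed.


End H.
End Ext.
Section CD.
Variables (n : nat) (B : 'M[int]_n).
Hypothesis Bsym : B^T = B.
Hypothesis Bunit : mxR B \in unitmx.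

Definition bf (u v : 'rV[R]_n) : R := (u *m mxR B *m v^T) 0 0.

Lemma bfDl u u' v : bf (u + u') v = bf u v + bf u' v.
Proof. by rewrite /bf !mulmxDl mxE. Qed.
Lemma bfZl a u v : bf (a *: u) v = a * bf u v.
Proof. by rewrite /bf -!scalemxAl mxE. Qed.
Lemma bfNl u v : bf (- u) v = - bf u v.
Proof. by rewrite -scaleN1r bfZl mulN1r. Qed.
Lemma bfBl u u' v : bf (u - u') v = bf u v - bf u' v.
Proof. by rewrite bfDl bfNl. Qed.
Lemma bf0l v : bf 0 v = 0.
Proof. by rewrite /bf !mul0mx mxE. Qed.
Lemma bf_suml I (r : seq I) (P : pred I) F v :
  bf (\sum_(i <- r | P i) F i) v = \sum_(i <- r | P i) bf (F i) v.
Proof. by rewrite /bf !mulmx_suml summxE. Qed.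

Lemma mxRT : (mxR B)^T = mxR B.
Proof. by rewrite /mxR map_trmx Bsym. Qed.

Lemma bfC u v : bf u v = bf v u.
Proof.
rewrite /bf; have -> : (u *m mxR B *m v^T) 0 0 = ((u *m mxR B *m v^T)^T) 0 0.
  by rewrite [RHS]mxE.
by rewrite /bf !trmx_mul trmxK mxRT mulmxA.
Qed.

Lemma bfDr u v v' : bf u (v + v') = bf u v + bf u v'.
Proof. by rewrite bfC bfDl !(bfC u). Qed.
Lemma bfZr a u v : bf u (a *: v) = a * bf u v.
Proof. by rewrite bfC bfZl bfC. Qed.
Lemma bfNr u v : bf u (- v) = - bf u v.
Proof. by rewrite bfC bfNl bfC. Qed.
Lemma bfBr u v v' : bf u (v - v') = bf u v - bf u v'.
Proof. by rewrite bfDr bfNr. Qed.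

Lemma qRE v : qR B v = bf v v. Proof. by []. Qed.

Lemma refl_apply x v : x *m reflmx B v = x - (2 / qR B v * bf x v) *: v.
Proof.
rewrite /reflmx mulmxBr mulmx1 -scalemxAr !mulmxA.
by rewrite [x *m _ *m v^T]mx11_scalar mul_scalar_mx scalerA.
Qed.

Definition isoR (g : 'M[R]_n) := forall u v, bf (u *m g) (v *m g) = bf u v.

Lemma refl_refl v : qR B v != 0 -> reflmx B v *m reflmx B v = 1%:M.
Proof.
move=> hq; apply: mx_eq_rows => x; rewrite mulmxA mulmx1 !refl_apply.
rewrite bfBl bfZl -qRE.
apply/rowP => i; rewrite !mxE; field; exact: hq.
Qed.

Lemma refl_iso v : qR B v != 0 -> isoR (reflmx B v).
Proof.
move=> hq x y; rewrite !refl_apply !(bfBl, bfBr, bfZl, bfZr) -!qRE (bfC v y).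
field; exact: hq.
Qed.

Lemma refl_fix v x : bf x v = 0 -> x *m reflmx B v = x.
Proof. by move=> h; rewrite refl_apply h mulr0 scale0r subr0. Qed.

Lemma refl_comp_cat s1 s2 : refl_comp B (s1 ++ s2) = refl_comp B s2 *m refl_comp B s1.
Proof.
elim: s1 => [|v s1 IH] /=; first by rewrite mulmx1.
by rewrite IH mulmxA.
Qed.

Lemma refl_comp_rev s : all (fun v => qR B v != 0) s ->
  refl_comp B s *m refl_comp B (rev s) = 1%:M.
Proof.
elim: s => [|v s IH] /=; first by rewrite mulmx1.
move=> /andP[hv hs]; rewrite rev_cons -cats1 refl_comp_cat /= mul1mx.
by rewrite -mulmxA (mulmxA (reflmx B v)) refl_refl // mul1mx IH.
Qed.


Definition orthX (X : seq 'rV[R]_n) :=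
  [/\ uniq X, (forall x y, x \in X -> y \in X -> x != y -> bf x y = 0)
    & (forall x, x \in X -> qR B x != 0)].

Lemma orth_size X : orthX X -> (size X <= n)%N.
Proof.
case=> uX oX aX.
have fX : free X.
  apply/(@freeP _ _ _ (in_tuple X)) => k hk i.
  have := congr1 (fun u => bf u X`_i) hk.
  rewrite bf0l bf_suml (bigD1 i) //= big1 ?addr0.
    rewrite bfZl -qRE => /eqP; rewrite mulf_eq0 (negPf (aX _ (mem_nth 0 (ltn_ord i)))).
    by rewrite orbF => /eqP.
  move=> j hj; rewrite bfZl oX ?mulr0 //; try exact: mem_nth.
  by rewrite nth_uniq.
move: fX; rewrite /free => /eqP <-.
by have := dimvS (subvf <<X>>%VS); rewrite dimvf dim_matrix mul1r.
Qed.

Lemma iso_comp g h : isoR g -> isoR h -> isoR (g *m h).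
Proof. by move=> hg hh u v; rewrite !mulmxA hh hg. Qed.

Lemma iso_refl_comp s : all (fun v => qR B v != 0) s -> isoR (refl_comp B s).
Proof.
elim: s => [|v s IH] /=; first by move=> _ u w; rewrite !mulmx1.
by move=> /andP[hv hs]; apply: iso_comp; [exact: IH | exact: refl_iso].
Qed.

Lemma noaniso_id X g : orthX X -> isoR g -> (forall x, x \in X -> x *m g = x) ->
  (forall x, (forall y, y \in X -> bf x y = 0) -> qR B x = 0) -> g = 1%:M.
Proof.
case=> uX oX aX ig fX noa.
pose perp u := forall y, y \in X -> bf u y = 0.
have pD u u' : perp u -> perp u' -> perp (u + u').
  by move=> hu hu' y hy; rewrite bfDl hu ?hu' ?addr0.
have pa u u' : perp u -> perp u' -> bf u u' = 0.
  move=> hu hu'; have := noa _ (pD _ _ hu hu').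
  rewrite qRE !(bfDl, bfDr) -!qRE !noa // (bfC u' u) add0r addr0 => /eqP.
  by rewrite -mulr2n mulrn_eq0 /= => /eqP.
have pg w : perp (w *m g - w).
  by move=> y hy; rewrite bfBl -{1}(fX y hy) ig subrr.
have pw w : perp (w - \sum_(y <- X) (bf w y / qR B y) *: y).
  move=> y0 hy0; rewrite bfBl bf_suml (bigD1_seq y0) //= big1_seq.
    by rewrite addr0 bfZl -qRE mulfVK ?subrr // aX.
  by move=> y /andP[hy hy2]; rewrite bfZl (oX y y0 hy2 hy0 hy) mulr0.
have pz u : perp u -> u = 0.
  move=> hu.
  have uA : u *m mxR B = 0.
    apply/rowP => j; rewrite [RHS]mxE.
    have -> : (u *m mxR B) 0 j = bf u (delta_mx 0 j).
      by rewrite /bf trmx_delta -colE [RHS]mxE.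
    set w : 'rV_n := delta_mx 0 j.
    rewrite -(subrK (\sum_(y <- X) (bf w y / qR B y) *: y) w) bfDr.
    rewrite bfC pa ?add0r //.
    rewrite bfC bf_suml big1_seq // => y /andP[_ hy].
    by rewrite bfZl (bfC y u) hu ?mulr0.
  by rewrite -(mulmxK Bunit u) uA mul0mx.
apply: mx_eq_rows => w; rewrite mulmx1; apply/eqP; rewrite -subr_eq0; apply/eqP.
exact: pz.
Qed.


Lemma cd_step X g x : orthX X -> isoR g -> (forall w, w \in X -> w *m g = w) ->
  qR B x != 0 -> (forall y, y \in X -> bf x y = 0) ->
  exists vs0, all (fun v => qR B v != 0) vs0 /\
    x *m (g *m refl_comp B (rev vs0)) = x /\
    (forall w, w \in X -> w *m (g *m refl_comp B (rev vs0)) = w).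
Proof.
case=> uX oX aX ig fX ax px.
set b := bf (x *m g) x.
have qxg : bf (x *m g) (x *m g) = qR B x by rewrite ig.
have wy w : w \in X -> bf w (x *m g) = 0.
  by move=> hw; rewrite -{1}(fX w hw) ig bfC px.
have wx w : w \in X -> bf w x = 0 by move=> hw; rewrite bfC px.
pose y := x *m g - x; pose z := x *m g + x.
have qy : qR B y = 2 * qR B x - 2 * b.
  by rewrite qRE /y !(bfBl, bfBr) qxg -!qRE (bfC x (x *m g)) -/b; ring.
have qz : qR B z = 2 * qR B x + 2 * b.
  by rewrite qRE /z !(bfDl, bfDr) qxg -!qRE (bfC x (x *m g)) -/b; ring.
have [hy|hy0] := boolP (qR B y != 0).
  exists [:: y]; rewrite /= hy; split => //.
  rewrite /= mul1mx; split.
    rewrite mulmxA refl_apply.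
    have -> : 2 / qR B y * bf (x *m g) y = 1.
      move: hy; rewrite qy /y bfBr qxg -/b => hy; field.
      exact: hy.
    by rewrite scale1r /y opprB addrC subrK.
  move=> w hw; rewrite mulmxA (fX w hw) refl_fix //.
  by rewrite /y bfBr wy ?wx ?subrr.
have hz : qR B z != 0.
  apply: contraT => /negPn /eqP h; move/negPn/eqP: hy0 => h'.
  move: ax; rewrite -[qR B x](@mulfK _ 4) //.
  have -> : qR B x * 4 = qR B y + qR B z by rewrite qy qz; ring.
  by rewrite h h' addr0 mul0r eqxx.
  by rewrite pnatr_eq0.
exists [:: z; x]; rewrite /= hz ax; split => //.
rewrite /= mul1mx; split.
  rewrite !mulmxA [x *m g *m reflmx B z]refl_apply.
  have -> : 2 / qR B z * bf (x *m g) z = 1.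
    move: hz; rewrite qz /z bfDr qxg -/b => hz; field.
    exact: hz.
  rewrite scale1r /z opprD addrA subrr sub0r refl_apply bfNl -qRE.
  apply/rowP => i; rewrite !mxE; field; exact: ax.
move=> w hw; rewrite !mulmxA (fX w hw) !refl_fix //.
all: first [by rewrite wx | by rewrite /z bfDr wy ?wx ?addr0].
Qed.

Lemma CD_aux k : forall X g, (n - size X <= k)%N -> orthX X -> isoR g ->
  (forall x, x \in X -> x *m g = x) ->
  exists vs, all (fun v => qR B v != 0) vs /\ refl_comp B vs = g.
Proof.
elim: k => [|k IH] X g hk oX ig fX.
  have [[x [ax px]]|nx] := classic (exists x, qR B x != 0 /\ forall y, y \in X -> bf x y = 0).
    exfalso; have : orthX (x :: X).
      case: oX => uX oX' aX; split.
      - rewrite /= uX andbT; apply/negP => hx; move: (px _ hx); rewrite -qRE.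
        by move=> h; move: ax; rewrite h eqxx.
      - move=> u v; rewrite !inE => /orP[/eqP->|hu] /orP[/eqP->|hv]; rewrite ?eqxx //.
        + by move=> _; rewrite px.
        + by move=> _; rewrite bfC px.
        + exact: oX'.
      - by move=> u; rewrite inE => /orP[/eqP->|/aX].
    move/orth_size => /=; move: hk; rewrite leqn0 subn_eq0 => h1 h2.
    by have := leq_trans h2 h1; rewrite ltnn.
  exists [::]; split => //=; symmetry; apply: (noaniso_id _ _ oX ig fX) => x px.
  by apply/eqP; apply: contraT => ax; exfalso; apply: nx; exists x; split.
have [[x [ax px]]|nx] := classic (exists x, qR B x != 0 /\ forall y, y \in X -> bf x y = 0).
  have oX2 : orthX (x :: X).
    case: oX => uX oX' aX; split.
    - rewrite /= uX andbT; apply/negP => hx; move: (px _ hx); rewrite -qRE.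
      by move=> h; move: ax; rewrite h eqxx.
    - move=> u v; rewrite !inE => /orP[/eqP->|hu] /orP[/eqP->|hv]; rewrite ?eqxx //.
      + by move=> _; rewrite px.
      + by move=> _; rewrite bfC px.
      + exact: oX'.
    - by move=> u; rewrite inE => /orP[/eqP->|/aX].
  have [vs0 [a0 [hx hw]]] := cd_step _ _ _ oX ig fX ax px.
  have a0r : all (fun v => qR B v != 0) (rev vs0) by rewrite all_rev.
  have hk' : (n - size (x :: X) <= k)%N.
    by rewrite /= subnS; move: hk; case: (n - size X)%N.
  have ig' : isoR (g *m refl_comp B (rev vs0)).
    by apply: iso_comp => //; exact: iso_refl_comp.
  have fX' : forall u, u \in x :: X -> u *m (g *m refl_comp B (rev vs0)) = u.
    by move=> u; rewrite inE => /orP[/eqP->|/hw].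
  have [vs [av hv]] := IH _ _ hk' oX2 ig' fX'.
  exists (vs0 ++ vs); rewrite all_cat a0 av; split => //.
  rewrite refl_comp_cat hv -mulmxA.
  by have := refl_comp_rev _ a0r; rewrite revK => ->; rewrite mulmx1.
exists [::]; split => //=; symmetry; apply: (noaniso_id _ _ oX ig fX) => x px.
by apply/eqP; apply: contraT => ax; exfalso; apply: nx; exists x; split.
Qed.

Theorem CD g : isoR g -> exists vs, all (fun v => qR B v != 0) vs /\ refl_comp B vs = g.
Proof.
move=> ig; apply: (@CD_aux n [::] g) => //; first by rewrite subn0.
Qed.

End CD.



Lemma mxRM m n p (A : 'M[int]_(m,n)) (B : 'M[int]_(n,p)) : mxR (A *m B) = mxR A *m mxR B.
Proof. by rewrite /mxR map_mxM. Qed.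
Lemma mxRZ m n (a : int) (A : 'M[int]_(m,n)) : mxR (a *: A) = a%:~R *: mxR A.
Proof. by rewrite /mxR map_mxZ. Qed.
Lemma mxR_tr m n (A : 'M[int]_(m,n)) : mxR A^T = (mxR A)^T.
Proof. by rewrite /mxR map_trmx. Qed.
Lemma mxQM m n p (A : 'M[int]_(m,n)) (B : 'M[int]_(n,p)) : mxQ (A *m B) = mxQ A *m mxQ B.
Proof. by rewrite /mxQ map_mxM. Qed.
Lemma mxQD m n (A B : 'M[int]_(m,n)) : mxQ (A + B) = mxQ A + mxQ B.
Proof. by rewrite /mxQ map_mxD. Qed.
Lemma mxQ1 n : mxQ (1%:M : 'M[int]_n) = 1%:M.
Proof. by rewrite /mxQ map_mx1. Qed.

Lemma sig_det n (M : 'M[int]_n) p q : has_signature (mxR M) p q -> \det M != 0.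
Proof.
case=> _ [P [_ E]]; move/(congr1 determinant): E.
rewrite det_diag !det_mulmx det_tr /mxR det_map_mx => E.
apply/eqP => h; move: E; rewrite h mulr0 mul0r => /esym /eqP.
apply/negP; rewrite prodf_seq_neq0; apply/allP => i _ /=; rewrite mxE.
by case: ifP => _; rewrite ?oppr_eq0 oner_eq0.
Qed.

Lemma scalemx_inj (T : idomainType) m n (c : T) (M N : 'M[T]_(m,n)) :
  c != 0 -> c *: M = c *: N -> M = N.
Proof.
move=> hc /matrixP E; apply/matrixP => i j; have := E i j; rewrite !mxE.
exact: mulfI.
Qed.
Arguments scalemx_inj {T m n c M N}.

Lemma comm_scalar_int n (A X : 'M[int]_n) (c : int) : c != 0 ->
  A *m X = c%:M -> X *m A = c%:M.
Proof.
move=> hc E.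
have cQ : (c%:~R : rat) != 0 by rewrite intr_eq0.
have E' : mxQ A *m ((c%:~R)^-1 *: mxQ X) = 1%:M.
  rewrite -scalemxAr -mxQM E /mxQ.
  apply/matrixP => i j; rewrite !mxE; case: (i == j); rewrite ?mulr1n ?mulr0n ?mulr0 //.
  by rewrite mulVf.
have := mulmx1C E'; rewrite -scalemxAl -mxQM => /matrixP F.
apply/matrixP => i j; have := F i j; rewrite !mxE.
case: (i == j); rewrite ?mulr1n ?mulr0n => /eqP; rewrite ?mulf_eq0 ?invr_eq0 ?(negPf cQ) /=.
  move=> /eqP H; apply/eqP; rewrite -(eqr_int rat); apply/eqP.
  by apply: (mulfI (invr_neq0 cQ)); rewrite H mulVf.
by move=> /eqP H; apply/eqP; rewrite -(eqr_int rat) H.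
Qed.

Lemma isoL_form n k1 k2 (B g : 'M[int]_n) (X1 : 'M_(k1, n)) (X2 : 'M_(k2, n)) :
  g *m B *m g^T = B -> (X1 *m g) *m B *m (X2 *m g)^T = X1 *m B *m X2^T.
Proof.
move=> giso; rewrite trmx_mul -!mulmxA (mulmxA g) (mulmxA (g *m B)) giso.
by rewrite !mulmxA.
Qed.

Lemma gamma_isom n k (B : 'M[int]_n) (J : 'M[int]_(k,n)) (g : 'M[int]_n) f :
  isom_L B g -> J *m g = J -> (forall x, inN B J x -> f x = x *m g) -> isom_N B J f.
Proof.
case=> gu giso Jg hf.
have inNg x : inN B J x -> inN B J (x *m g).
  by rewrite /inN -{2}Jg isoL_form.
split; first by move=> x hx; rewrite hf //; exact: inNg.
split; first by move=> x y hx hy; rewrite !hf ?mulmxDl //; move: hx hy; rewrite /inN !mulmxDl => -> ->; rewrite addr0.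
split; first by move=> x y hx hy; rewrite !hf // isoL_form.
move=> y hy.
have hyN : inN B J (y *m invmx g).
  by rewrite /inN -(@isoL_form _ _ _ B g (y *m invmx g) J giso) mulmxKV // Jg.
by exists (y *m invmx g) => //; rewrite hf ?mulmxKV.
Qed.

Lemma integral_mul n p (u : 'rV[rat]_n) (W : 'M[int]_(n,p)) :
  is_integral u -> is_integral (u *m mxQ W).
Proof.
move=> hu i; rewrite mxE; apply: rpred_sum => j _; rewrite mxE.
by apply: rpredM; [exact: hu | exact: intr_int].
Qed.

Lemma iso_real n (B G : 'M[int]_n) (d : int) : d != 0 ->
  G *m B *m G^T = d ^+ 2 *: B ->
  isoR n B ((d%:~R : R)^-1 *: mxR G).
Proof.
move=> hd E u v; rewrite /bf.
have A (X1 X2 : 'rV[R]_n) (M A : 'M[R]_n) :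
  (X1 *m M) *m A *m (X2 *m M)^T = X1 *m (M *m A *m M^T) *m X2^T.
  by rewrite trmx_mul !mulmxA.
rewrite A; congr (_ 0 0); congr (_ *m _ *m _).
have dR : (d%:~R : R) != 0 by rewrite intr_eq0.
rewrite linearZ /= -scalemxAl -scalemxAr -scalemxAl scalerA -mxR_tr -!mxRM E mxRZ.
by rewrite scalerA rmorphXn /= -expr2 -exprMn mulVf // expr1n scale1r.
Qed.

Section Main.
Variables (b t : nat) (B : 'M[int]_b) (C : 'M[int]_(1 + t)) (J : 'M[int]_(1 + t, b)).
Hypothesis Bsym : B^T = B.
Hypothesis JBJ : J *m B *m J^T = C.
Hypothesis dB0 : \det B != 0.
Hypothesis dC0 : \det C != 0.

Let D := \det C.
Let dB := \det B.
Let k := D * dB.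
Let c := D ^+ 2 * dB.
Let e := dB * (c * dB).
Let m := c * e.

Lemma c0 : c != 0. Proof. by rewrite /c mulf_neq0 // expf_neq0. Qed.
Lemma e0 : e != 0. Proof. by rewrite /e !mulf_neq0 // c0. Qed.
Lemma m_gt0 : 0 < m.
Proof.
have -> : m = (c * dB) ^+ 2 by rewrite /m /e; ring.
by rewrite lt_def sqrf_eq0 mulf_neq0 ?c0 // sqr_ge0.
Qed.

Definition GG h := Gh b t B C J h.
Definition gR h : 'M[R]_b := ((D%:~R : R)^-1) *: mxR (GG h).
Definition vsh h := epsilon (inhabits [::])
  (fun vs => all (fun v => qR B v != 0) vs /\ refl_comp B vs = gR h).

Definition KeyT := ({ffun 'I_b * 'I_b -> 'I_(absz m).+1} * bool * bool)%type.
Definition key h : KeyT :=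
  ([ffun ij => inord (absz ((GG h) ij.1 ij.2 %% m)%Z)], 0 < \det (GG h),
   0 < \prod_(v <- vsh h) (- qR B v / 2)).

Lemma BRunit : mxR B \in unitmx.
Proof. by rewrite unitmxE unitfE /mxR det_map_mx /= intr_eq0. Qed.

Lemma vsh_spec h : isom_N B J h ->
  all (fun v => qR B v != 0) (vsh h) /\ refl_comp B (vsh h) = gR h.
Proof.
move=> hiso; rewrite /vsh; apply: (@epsilon_spec _ _ (fun vs => all (fun v => qR B v != 0) vs /\ refl_comp B vs = gR h)).
apply: (CD _ _ Bsym BRunit).
by apply: iso_real => //; exact: Gh_iso.
Qed.

Lemma bnd z : (absz (z %% m)%Z < (absz m).+1)%N.
Proof.
have m0 : m != 0 by rewrite gt_eqF ?m_gt0.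
have h0 := modz_ge0 z m0; have h1 := ltz_pmod z m_gt0.
rewrite ltnS -lez_nat !gez0_abs //; [exact: ltW | exact: ltW m_gt0].
Qed.

Lemma assoc3 (T : comPzRingType) n p (X : 'M[T]_(p, n)) (G A : 'M[T]_n) :
  (X *m G) *m A *m (X *m G)^T = X *m (G *m A *m G^T) *m X^T.
Proof. by rewrite trmx_mul !mulmxA. Qed.

Lemma detsq G : G *m B *m G^T = D ^+ 2 *: B -> \det G ^+ 2 = (D ^+ b) ^+ 2.
Proof.
move/(congr1 determinant); rewrite !det_mulmx det_tr detZ => E.
apply: (mulIf dB0).
have E' : (D ^+ b) ^+ 2 = (D ^+ 2) ^+ b by rewrite -!exprM mulnC.
by rewrite E' -E expr2 mulrAC.
Qed.
Lemma pair h1 h2 : isom_N B J h1 -> isom_N B J h2 -> key h1 = key h2 ->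
  exists g, tildeSOplus B g /\ J *m g = J /\
    (forall x, inN B J x -> h2 x = h1 (x *m g)).
Proof.
move=> i1 i2; rewrite /key; case=> /ffunP hf hd hp.
have N1 x : inN B J x -> x *m GG h1 = D *: h1 x := Gh_N _ _ _ _ _ JBJ _ i1 x.
have N2 x : inN B J x -> x *m GG h2 = D *: h2 x := Gh_N _ _ _ _ _ JBJ _ i2 x.
have [V1 R1] := vsh_spec _ i1; have [V2 R2] := vsh_spec _ i2.
rewrite /gR in R1 R2.
set G1 := GG h1 in hf hd N1 R1 *; set G2 := GG h2 in hf hd N2 R2 *.
have I1 : G1 *m B *m G1^T = D ^+ 2 *: B := Gh_iso _ _ _ _ _ Bsym JBJ _ i1.
have I2 : G2 *m B *m G2^T = D ^+ 2 *: B := Gh_iso _ _ _ _ _ Bsym JBJ _ i2.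
have J1 : J *m G1 = D *: J := Gh_J _ _ _ _ _ JBJ _ i1.
have J2 : J *m G2 = D *: J := Gh_J _ _ _ _ _ JBJ _ i2.
have m0 : m != 0 by rewrite gt_eqF ?m_gt0.
have hmod i j : (G2 i j %% m)%Z = (G1 i j %% m)%Z.
  have := hf (i, j); rewrite !ffunE /= => /(congr1 val); rewrite /= !inordK ?bnd // => E.
  by rewrite -(gez0_abs (modz_ge0 _ m0)) -E gez0_abs // modz_ge0.
clearbody G1 G2.
move: V1 V2 R1 R2 hp; move: (vsh h1) (vsh h2) => vs1 vs2 V1 V2 R1 R2 hp.
pose Y := \matrix_(i, j) ((G2 i j - G1 i j) %/ m)%Z.
have GY : G2 = G1 + m *: Y.
  apply/matrixP => i j; rewrite !mxE mulrC divzK; first by rewrite addrC subrK.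
  by rewrite -eqz_mod_dvd; apply/eqP; rewrite hmod.
pose X := B *m G1^T *m \adj B.
have G1X : G1 *m X = c%:M.
  by rewrite /X !mulmxA I1 -scalemxAl mul_mx_adj scale_scalar_mx.
have XG1 : X *m G1 = c%:M by apply: comm_scalar_int => //; exact: c0.
have XBX : X *m B *m X^T = k ^+ 2 *: B.
  have D2 : D ^+ 2 != 0 by rewrite expf_neq0.
  apply: (scalemx_inj D2).
  have -> : D ^+ 2 *: (X *m B *m X^T) = X *m (D ^+ 2 *: B) *m X^T.
    by rewrite scalemxAl scalemxAr.
  rewrite -I1 -assoc3 XG1.
  rewrite tr_scalar_mx mul_scalar_mx mul_mx_scalar scalerA scalerA.
  congr (_ *: _); rewrite /c /k; ring.
pose g := 1%:M + e *: (Y *m X).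
have cg : c *: g = G2 *m X.
  by rewrite /g GY mulmxDl G1X -scalemxAl scalerDr scalemx1 scalerA /m.
have cn0 := c0.
have gG1 : g *m G1 = G2.
  by apply: (scalemx_inj cn0); rewrite scalemxAl cg -mulmxA XG1 mul_mx_scalar.
have Jg : J *m g = J.
  apply: (scalemx_inj cn0); rewrite scalemxAr cg mulmxA J2 -J1 -mulmxA G1X.
  by rewrite mul_mx_scalar.
have giso : g *m B *m g^T = B.
  apply: (scalemx_inj (mulf_neq0 cn0 cn0)).
  have -> : (c * c) *: (g *m B *m g^T) = (c *: g) *m B *m (c *: g)^T.
    by rewrite linearZ /= -!scalemxAl -scalemxAr scalerA.
  rewrite cg assoc3 XBX.
  have -> : G2 *m (k ^+ 2 *: B) *m G2^T = k ^+ 2 *: (G2 *m B *m G2^T).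
    by rewrite scalemxAl scalemxAr.
  rewrite I2 scalerA.
  congr (_ *: _); rewrite /c /k; ring.
have d12 : \det G2 = \det G1.
  have s1 := detsq _ I1; have s2 := detsq _ I2.
  have dn0 : D ^+ b != 0 by rewrite expf_neq0.
  have : \det G2 ^+ 2 == \det G1 ^+ 2 by rewrite s1 s2.
  rewrite eqf_sqr => /orP[/eqP //|/eqP E].
  have nz : \det G1 != 0.
    apply/negP => /eqP h0; move: s1; rewrite h0 expr0n /= => /esym /eqP.
    by rewrite (negPf (expf_neq0 2 dn0)).
  move: hd; rewrite E oppr_gt0; case: (ltrgt0P (\det G1)) => //.
  by move=> h0; move: nz; rewrite h0 eqxx.
have detg : \det g = 1.
  apply: (mulfI (expf_neq0 b cn0)); rewrite -detZ cg det_mulmx d12 -det_mulmx G1X.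
  by rewrite det_scalar mulr1.
have gu : g \in unitmx by rewrite unitmxE detg unitr1.
have disc : acts_trivially_on_disc B g.
  move=> x hx.
  have gE : g = 1%:M + B *m (\adj B *m ((c * dB) *: (Y *m X))).
    by rewrite mulmxA mul_mx_adj mul_scalar_mx scalerA /g /e.
  rewrite gE mxQD mxQ1 mulmxDr mulmx1 addrC addKr mxQM mulmxA.
  exact: integral_mul.
have dR : (D%:~R : R) != 0 by rewrite intr_eq0.
have spin : real_spinor_norm_one B g.
  exists (rev vs1 ++ vs2); split; first by rewrite all_cat all_rev V1 V2.
  split.
    rewrite refl_comp_cat R2.
    have RR := refl_comp_rev _ _ _ V1.
    by rewrite -gG1 mxRM scalemxAr -R1 -mulmxA RR mulmx1.
  rewrite big_cat big_rev /=.
  have nz vs : all (fun v => qR B v != 0) vs -> \prod_(v <- vs) (- qR B v / 2) != 0.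
    move=> hv; rewrite prodf_seq_neq0; apply/allP => v /(allP hv) hq /=.
    by rewrite mulf_neq0 ?oppr_eq0 ?invr_eq0 ?pnatr_eq0.
  move: (nz _ V1) (nz _ V2) hp.
  set p1 := \prod_(v <- vs1) _; set p2 := \prod_(v <- vs2) _ => n1 n2 hp.
  case: (ltrgt0P p1) hp => h1' hp.
  - by rewrite mulr_gt0 // -hp.
  - have h2' : p2 < 0.
      by move: hp n2; case: (ltrgt0P p2) => //; move=> ->; rewrite eqxx.
    by rewrite nmulr_rgt0.
  - by move: n1; rewrite h1' eqxx.
exists g; split; first by split => //; split => //; split.
split => // x hx.
have hxg : inN B J (x *m g).
  by have := @isoL_form _ _ _ B g x J giso; rewrite Jg /inN => ->.
apply: (scalemx_inj dC0); rewrite -N1 // -N2 // -mulmxA gG1 //.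
Qed.


Lemma In_map_inv (A T : Type) (f : A -> T) (s : seq A) r :
  List.In r (map f s) -> exists x, r = f x.
Proof.
elim: s => [|a s IH] //= [<-|/IH //]; by exists a.
Qed.
Arguments In_map_inv {A T f s r}.

Lemma In_map_mem (A : eqType) (T : Type) (f : A -> T) (s : seq A) x :
  x \in s -> List.In (f x) (map f s).
Proof.
elim: s => [|a s IH] //=; rewrite inE => /orP[/eqP ->|/IH]; [left | right] => //.
Qed.

Lemma final (Mo2 : 'M[int]_b -> Prop) : subgroup_OL B Mo2 ->
  (forall g, tildeSOplus B g -> Mo2 g) -> arithmetic_subgroup_ON B J (Gamma B J Mo2).
Proof.
move=> [sub _] hT; split.
  move=> f [g [hg [Jg hf]]]; exact: (gamma_isom _ _ _ _ _ _ (sub g hg) Jg hf).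
pose P (kk : KeyT) (r : 'rV[int]_b -> 'rV[int]_b) :=
  isom_N B J r /\ (key r = kk \/ ~ (exists h, isom_N B J h /\ key h = kk)).
pose rep kk := epsilon (inhabits id) (P kk).
have idN : isom_N B J id.
  split => //; split => //; split => //; move=> y hy; by exists y.
have repP kk : P kk (rep kk).
  apply: epsilon_spec.
  case: (classic (exists h, isom_N B J h /\ key h = kk)) => [[h [h1 h2]]|nx].
    by exists h; split => //; left.
  by exists id; split => //; right.
exists (map rep (enum {: KeyT})); split.
  by move=> r /In_map_inv [kk ->]; case: (repP kk).
move=> h hh; exists (rep (key h)); split; first by apply: In_map_mem; rewrite mem_enum.
have [hr [hk|nx]] := repP (key h); last by exfalso; apply: nx; exists h.
have [g [hg [Jg hrel]]] := pair _ _ hr hh hk.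
exists (fun x => x *m g); last by move=> x hx; exact: hrel.
by exists g; split; [exact: hT | split].
Qed.
End Main.

Theorem mainTheorem10 (b : nat) (B : 'M[int]_b) (Mo2 : 'M[int]_b -> Prop)
  (t : nat) (C : 'M[int]_(1 + t)) (J : 'M[int]_(1 + t, b)) :
  is_lattice_gram B -> even_gram B -> has_signature (mxR B) 3 (b - 3) ->
  subgroup_OL B Mo2 ->
  is_lattice_gram C -> has_signature (mxR C) 1 t ->
  primitive_embedding C B J ->
  (forall g, tildeSOplus B g -> Mo2 g) ->
  arithmetic_subgroup_ON B J (Gamma B J Mo2).
Proof.
move=> Bsym _ sigB sub _ sigC [JBJ _] hT.
exact: (final _ _ _ _ _ Bsym JBJ (sig_det _ _ _ _ sigB) (sig_det _ _ _ _ sigC) _ sub hT).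
Qed.
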